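(* Let $\kappa_1,\kappa_2$ be real constants and $F$ a smooth real function of one variable. Consider the equation $$\sigma_{rr}+(\kappa_1+\kappa_2)\frac{\sigma_r}{r}-\kappa_1(1-\kappa_2)\frac{\sigma}{r^2}=\big(F(\sigma)\big)_{tt}$$ for a smooth function $\sigma(r,t)$, $r>0$. Then every smooth solution satisfies the four conservation laws $\partial_r T^r+\partial_t T^t=0$ with $(T^r,T^t)$ given by $$\Big(r^{\kappa_2-1}(r\sigma_r+\kappa_1\sigma),\ -r^{\kappa_2}\sigma_tF'(\sigma)\Big),$$ $$\Big(t\,r^{\kappa_2-1}(r\sigma_r+\kappa_1\sigma),\ r^{\kappa_2}\big(F(\sigma)-t\sigma_tF'(\sigma)\big)\Big),$$ $$\Big(r^{\kappa_1}\big(r\sigma_r-(1-\kappa_2)\sigma\big),\ -r^{1+\kappa_1}\sigma_tF'(\sigma)\Big),$$ $$\Big(t\,r^{\kappa_1}\big(r\sigma_r-(1-\kappa_2)\sigma\big),\ r^{1+\kappa_1}\big(F(\sigma)-t\sigma_tF'(\sigma)\big)\Big),$$ corresponding to the multipliers $r^{\kappa_2}$, $tr^{\kappa_2}$, $r^{1+\kappa_1}$, $tr^{1+\kappa_1}$, respectively.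
   Context: Subscripts denote partial derivatives; $F'$ is the derivative of $F$. *)

(* Defs.v *)
From Stdlib Require Import Reals List.
From Coquelicot Require Import Coquelicot.
Open Scope R_scope.

Definition pr (f : R -> R -> R) (r t : R) : R := Derive (fun x => f x t) r.
Definition pt (f : R -> R -> R) (r t : R) : R := Derive (fun y => f r y) t.

Fixpoint dw (w : list bool) (f : R -> R -> R) : R -> R -> R :=
  match w with
  | nil => f
  | b :: w' => if b then pr (dw w' f) else pt (dw w' f)
  end.

Definition smooth_half (f : R -> R -> R) : Prop :=
  forall (w : list bool) (r t : R), 0 < r ->
    ex_derive (fun x => dw w f x t) r /\
    ex_derive (fun y => dw w f r y) t /\
    continuity_2d_pt (dw w f) r t.

Definition smooth1 (F : R -> R) : Prop :=
  forall (n : nat) (x : R), ex_derive (Derive_n F n) x.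

Definition divergence (Tr Tt : R -> R -> R) (r t : R) : R :=
  pr Tr r t + pt Tt r t.

Section Currents.
Variables (k1 k2 : R) (F : R -> R) (sigma : R -> R -> R).

Definition T1r r t := Rpower r (k2 - 1) * (r * pr sigma r t + k1 * sigma r t).
Definition T1t r t := - Rpower r k2 * pt sigma r t * Derive F (sigma r t).

Definition T2r r t := t * Rpower r (k2 - 1) * (r * pr sigma r t + k1 * sigma r t).
Definition T2t r t :=
  Rpower r k2 * (F (sigma r t) - t * pt sigma r t * Derive F (sigma r t)).

Definition T3r r t := Rpower r k1 * (r * pr sigma r t - (1 - k2) * sigma r t).
Definition T3t r t := - Rpower r (1 + k1) * pt sigma r t * Derive F (sigma r t).

Definition T4r r t := t * Rpower r k1 * (r * pr sigma r t - (1 - k2) * sigma r t).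
Definition T4t r t :=
  Rpower r (1 + k1) * (F (sigma r t) - t * pt sigma r t * Derive F (sigma r t)).
End Currents.

(* Main.v *)
Require Import Defs.
From Stdlib Require Import Reals List Lra.
From Coquelicot Require Import Coquelicot.
Open Scope R_scope.

Lemma Dpow a r : 0 < r -> is_derive (fun x => Rpower x a) r (a * Rpower r (a - 1)).
Proof. intros. apply is_derive_Reals. now apply derivable_pt_lim_power. Qed.

Lemma DerPow a r : 0 < r -> Derive (fun x => Rpower x a) r = a * Rpower r (a - 1).
Proof. intros; apply is_derive_unique, Dpow; auto. Qed.

Lemma Rpow_m1 a r : 0 < r -> Rpower r (a - 1) = Rpower r a / r.
Proof. intros. unfold Rminus. rewrite Rpower_plus, Rpower_Ropp, Rpower_1 by lra. reflexivity. Qed.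

Lemma Rpow_p1 a r : 0 < r -> Rpower r (1 + a) = r * Rpower r a.
Proof. intros. rewrite Rpower_plus, Rpower_1 by lra. reflexivity. Qed.

Section S.
Variables (k1 k2 : R) (F : R -> R) (sigma : R -> R -> R)
  (HF : smooth1 F) (Hs : smooth_half sigma).

Lemma exF x : ex_derive F x.
Proof. exact (HF O x). Qed.
Lemma exF1 x : ex_derive (Derive F) x.
Proof. exact (HF 1%nat x). Qed.

Lemma exs_r r t : 0 < r -> ex_derive (fun x => sigma x t) r.
Proof. intros; exact (proj1 (Hs nil r t H)). Qed.
Lemma exs_t r t : 0 < r -> ex_derive (fun y => sigma r y) t.
Proof. intros; exact (proj1 (proj2 (Hs nil r t H))). Qed.
Lemma exsr_r r t : 0 < r -> ex_derive (fun x => pr sigma x t) r.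
Proof. intros; exact (proj1 (Hs (true::nil) r t H)). Qed.
Lemma exst_t r t : 0 < r -> ex_derive (fun y => pt sigma r y) t.
Proof. intros; exact (proj1 (proj2 (Hs (false::nil) r t H))). Qed.

Definition G r y := pt (fun r' t' => F (sigma r' t')) r y.

Lemma chain r y : 0 < r -> G r y = pt sigma r y * Derive F (sigma r y).
Proof.
  intros Hr. unfold G, pt. apply is_derive_unique.
  apply (is_derive_comp F (fun y => sigma r y)).
  - apply Derive_correct, exF.
  - apply Derive_correct, exs_t; auto.
Qed.

Lemma exG r t : 0 < r -> ex_derive (fun y => G r y) t.
Proof.
  intros Hr. apply (ex_derive_ext (fun y => pt sigma r y * Derive F (sigma r y))).
  { intros; symmetry; apply chain; auto. }
  apply ex_derive_mult. apply exst_t; auto.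
  apply (ex_derive_comp (Derive F) (fun y => sigma r y)). apply exF1. apply exs_t; auto.
Qed.


Ltac sides Hr := repeat match goal with
  | |- _ /\ _ => split
  | |- True => exact I
  | |- ex_derive (fun x => Rpower x _) _ => eexists; apply Dpow; exact Hr
  | |- ex_derive (fun x => pr _ x _) _ => apply exsr_r; exact Hr
  | |- ex_derive (fun x => _ x _) _ => apply exs_r; exact Hr
  end.

Ltac fin r t Hr := rewrite ?DerPow by exact Hr;
  change (Derive (fun x => pr sigma x t) r) with (pr (pr sigma) r t);
  change (Derive (fun x => sigma x t) r) with (pr sigma r t); ring.

Lemma DT1r r t : 0 < r -> pr (T1r k1 k2 sigma) r t =
  (k2-1)*Rpower r (k2-1-1)*(r*pr sigma r t+k1*sigma r t) + Rpower r (k2-1)*(pr sigma r t + r*pr (pr sigma) r t + k1*pr sigma r t).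
Proof.
  intros Hr. unfold pr at 1.
  unfold T1r. apply is_derive_unique. auto_derive; [sides Hr | fin r t Hr].
Qed.

Lemma DT2r r t : 0 < r -> pr (T2r k1 k2 sigma) r t =
  t * ((k2-1)*Rpower r (k2-1-1)*(r*pr sigma r t+k1*sigma r t) + Rpower r (k2-1)*(pr sigma r t + r*pr (pr sigma) r t + k1*pr sigma r t)).
Proof.
  intros Hr. unfold pr at 1.
  unfold T2r. apply is_derive_unique. auto_derive; [sides Hr | fin r t Hr].
Qed.

Lemma DT3r r t : 0 < r -> pr (T3r k1 k2 sigma) r t =
  k1*Rpower r (k1-1)*(r*pr sigma r t-(1-k2)*sigma r t) + Rpower r k1*(pr sigma r t + r*pr (pr sigma) r t - (1-k2)*pr sigma r t).
Proof.
  intros Hr. unfold pr at 1.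
  unfold T3r. apply is_derive_unique. auto_derive; [sides Hr | fin r t Hr].
Qed.

Lemma DT4r r t : 0 < r -> pr (T4r k1 k2 sigma) r t =
  t * (k1*Rpower r (k1-1)*(r*pr sigma r t-(1-k2)*sigma r t) + Rpower r k1*(pr sigma r t + r*pr (pr sigma) r t - (1-k2)*pr sigma r t)).
Proof.
  intros Hr. unfold pr at 1.
  unfold T4r. apply is_derive_unique. auto_derive; [sides Hr | fin r t Hr].
Qed.

Lemma DTat a r t : 0 < r ->
  Derive (fun y => - Rpower r a * pt sigma r y * Derive F (sigma r y)) t
  = - Rpower r a * Derive (fun y => G r y) t.
Proof.
  intros Hr.
  rewrite (Derive_ext _ (fun y => (- Rpower r a) * G r y)).
  2:{ intros; rewrite chain by auto; ring. }
  rewrite Derive_scal. reflexivity.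
Qed.

Lemma DTbt a r t : 0 < r ->
  Derive (fun y => Rpower r a * (F (sigma r y) - y * pt sigma r y * Derive F (sigma r y))) t
  = Rpower r a * (G r t - (G r t + t * Derive (fun y => G r y) t)).
Proof.
  intros Hr.
  rewrite (Derive_ext _ (fun y => Rpower r a * (F (sigma r y) - y * G r y))).
  2:{ intros; rewrite chain by auto; ring. }
  apply is_derive_unique. auto_derive.
  - repeat split; auto. apply exF. apply exs_t; auto. apply exG; auto.
  - change (Derive (fun x => F x)) with (Derive F). rewrite (chain r t Hr). unfold pt. ring.
Qed.
Lemma P1 r t : 0 < r -> pt (T1t k2 F sigma) r t = - Rpower r k2 * Derive (fun y => G r y) t.
Proof. intros; exact (DTat k2 r t H). Qed.
Lemma P3 r t : 0 < r -> pt (T3t k1 F sigma) r t = - Rpower r (1+k1) * Derive (fun y => G r y) t.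
Proof. intros; exact (DTat (1+k1) r t H). Qed.
Lemma P2 r t : 0 < r -> pt (T2t k2 F sigma) r t = Rpower r k2 * (G r t - (G r t + t * Derive (fun y => G r y) t)).
Proof. intros; exact (DTbt k2 r t H). Qed.
Lemma P4 r t : 0 < r -> pt (T4t k1 F sigma) r t = Rpower r (1+k1) * (G r t - (G r t + t * Derive (fun y => G r y) t)).
Proof. intros; exact (DTbt (1+k1) r t H). Qed.
End S.

Theorem mainTheorem2 (k1 k2 : R) (F : R -> R) (sigma : R -> R -> R)
  (HF : smooth1 F) (Hs : smooth_half sigma)
  (Heq : forall r t : R, 0 < r ->
     pr (pr sigma) r t + (k1 + k2) * pr sigma r t / r
       - k1 * (1 - k2) * sigma r t / r ^ 2
     = pt (pt (fun r' t' => F (sigma r' t'))) r t) :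
  forall r t : R, 0 < r ->
    divergence (T1r k1 k2 sigma) (T1t k2 F sigma) r t = 0 /\
    divergence (T2r k1 k2 sigma) (T2t k2 F sigma) r t = 0 /\
    divergence (T3r k1 k2 sigma) (T3t k1 F sigma) r t = 0 /\
    divergence (T4r k1 k2 sigma) (T4t k1 F sigma) r t = 0.
Proof.
  intros r t Hr.
  assert (HE := Heq r t Hr).
  change (pt (pt (fun r' t' => F (sigma r' t'))) r t) with (Derive (fun y => G F sigma r y) t) in HE.
  assert (HC : pr (pr sigma) r t = Derive (fun y => G F sigma r y) t
     - (k1 + k2) * pr sigma r t / r + k1 * (1 - k2) * sigma r t / r ^ 2) by lra.
  unfold divergence.
  rewrite DT1r, DT2r, DT3r, DT4r, P1, P2, P3, P4 by assumption.
  rewrite HC.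
  rewrite (Rpow_m1 (k2 - 1) r Hr), !(Rpow_m1 _ r Hr), !(Rpow_p1 _ r Hr).
  assert (r <> 0) by lra.
  repeat split; field; auto.
Qed.
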